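(* Fix $\varepsilon>0$ and $R>1$. There is a constant $\lambda_0$ depending only on $\varepsilon$ and $R$, with $\lambda_0=\mathcal{O}(\varepsilon^{-1})$ for fixed $R$, such that for every $\lambda\ge\lambda_0$, every finite nonempty $V\subset\mathbb{R}^d$ and every hierarchy $(\mathcal{T},R)$ on $V$ satisfying the separation property, the initial spanner $\mathcal{S}_0$ (with parameter $\lambda$), viewed as a graph on $V$, is a $(1+\varepsilon)$-spanner of $V$: for all $p,q\in V$ the shortest-path distance in $\mathcal{S}_0$ between $p$ and $q$ is at most $(1+\varepsilon)\lVert pq\rVert$.
   Context: $\lVert xy\rVert$ and $d(x,y)$ denote Euclidean distance. Hierarchy: given $R>1$ and a finite $V\subset\mathbb{R}^d$, a hierarchy $(\mathcal{T},R)$ is a finite rooted tree $\mathcal{T}$ whose nodes, called explicit clusters, are distinct pairs $(p,l)$ with center $p\in V$ and level $l\in\mathbb{Z}$; a cluster $(p,l)$ covers the ball of radius $R^l$ around $p$; every non-root cluster $(p,l)$ has a parent of level $l+1$ whose center $q$ satisfies $d(p,q)\le R^{l+1}$; every point of $V$ is the center of at least one explicit cluster. For every explicit cluster $(p,l)$ and every integer $l'<l$, the pair $(p,l')$ is an implicit cluster; the clusters of the hierarchy are the explicit and implicit ones. Separation property: for any two clusters $(p,l),(q,l)$ of the same level with $p\neq q$, $d(p,q)>R^l$. Initial spanner $\mathcal{S}_0$ with parameter $\lambda>0$: the graph whose vertices are the clusters, with a type I edge between any two clusters $(p,l),(q,l)$ of the same level with $p\ne q$ and $d(p,q)\le\lambda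 R^l$, and a type II edge between every explicit cluster and each of its children in $\mathcal{T}$. As a graph on $V$, $\mathcal{S}_0$ has an edge $\{p,q\}$ of weight $\lVert pq\rVert$ whenever some edge of $\mathcal{S}_0$ joins a cluster centered at $p$ to a cluster centered at $q\ne p$. *)

(* Defs.v *)
From mathcomp Require Import all_boot all_order all_algebra all_reals.
Set Implicit Arguments. Unset Strict Implicit. Unset Printing Implicit Defensive.
Import Order.TTheory GRing.Theory Num.Theory.
Local Open Scope ring_scope.

Definition edist (K : realType) (d : nat) (p q : 'rV[K]_d) : K :=
  Num.sqrt (\sum_(i < d) (p ord0 i - q ord0 i) ^+ 2).

(* a cluster: (center, level) *)
Notation cluster K d := ('rV[K]_d * int)%type.

(* A hierarchy (T, R) on V: [nodes] = the explicit clusters (distinct pairs),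
   [root] the root, [par] the parent map (meaningful on non-root nodes). *)
Definition is_hierarchy (K : realType) (d : nat) (R : K) (V : seq 'rV[K]_d)
    (nodes : seq (cluster K d)) (root : cluster K d)
    (par : cluster K d -> cluster K d) : Prop :=
  [/\ uniq nodes,
      root \in nodes,
      (forall c, c \in nodes -> c.1 \in V),
      (forall c, c \in nodes -> c != root ->
         [/\ par c \in nodes, (par c).2 = c.2 + 1
           & edist c.1 (par c).1 <= R ^ (c.2 + 1)]) &
      (forall p, p \in V -> exists l, (p, l) \in nodes)].

Definition is_child (K : realType) (d : nat) (nodes : seq (cluster K d))
    (root : cluster K d) (par : cluster K d -> cluster K d)
    (a b : cluster K d) : Prop :=
  [/\ b \in nodes, b != root & par b = a].

(* clusters of the hierarchy = explicit clusters and implicit ones *)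
Definition is_cluster (K : realType) (d : nat) (nodes : seq (cluster K d))
    (c : cluster K d) : Prop :=
  exists l : int, c.2 <= l /\ (c.1, l) \in nodes.

Definition separation (K : realType) (d : nat) (R : K)
    (nodes : seq (cluster K d)) : Prop :=
  forall (p q : 'rV[K]_d) (l : int),
    is_cluster nodes (p, l) -> is_cluster nodes (q, l) -> p != q ->
    R ^ l < edist p q.

Definition S0_cluster_edge (K : realType) (d : nat) (R lambda : K)
    (nodes : seq (cluster K d)) (root : cluster K d)
    (par : cluster K d -> cluster K d) (a b : cluster K d) : Prop :=
  [/\ is_cluster nodes a, is_cluster nodes b, a.2 = b.2, a.1 != b.1
    & edist a.1 b.1 <= lambda * R ^ a.2]
  \/
  (is_child nodes root par a b \/ is_child nodes root par b a).

Definition S0_edge (K : realType) (d : nat) (R lambda : K)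
    (nodes : seq (cluster K d)) (root : cluster K d)
    (par : cluster K d -> cluster K d) (p q : 'rV[K]_d) : Prop :=
  p != q /\ exists lp lq : int,
    S0_cluster_edge R lambda nodes root par (p, lp) (q, lq).

Fixpoint walk_ok (T : Type) (E : T -> T -> Prop) (x : T) (s : seq T) : Prop :=
  if s is y :: s' then E x y /\ walk_ok E y s' else True.

Fixpoint walk_len (T : Type) (K : realType) (w : T -> T -> K) (x : T)
    (s : seq T) : K :=
  if s is y :: s' then w x y + walk_len w y s' else 0.

Definition S0_dist_le (K : realType) (d : nat) (R lambda : K)
    (nodes : seq (cluster K d)) (root : cluster K d)
    (par : cluster K d -> cluster K d) (p q : 'rV[K]_d) (D : K) : Prop :=
  exists s : seq 'rV[K]_d,
    [/\ walk_ok (S0_edge R lambda nodes root par) p s,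
        last p s = q
      & walk_len (@edist K d) p s <= D].

(* Main.v *)
Require Import Defs.
From mathcomp Require Import all_boot all_order all_algebra all_reals.
From mathcomp Require Import ring lra zify.
Import Order.TTheory GRing.Theory Num.Theory.
Local Open Scope ring_scope.

Section Geo.
Variables (K : realType) (d : nat).

Lemma CS (u v : 'I_d -> K) :
  (\sum_i u i * v i) ^+ 2 <= (\sum_i u i ^+ 2) * (\sum_i v i ^+ 2).
Proof.
have H : 0 <= \sum_i \sum_j (u i * v j - u j * v i) ^+ 2.
  by apply: sumr_ge0 => i _; apply: sumr_ge0 => j _; exact: sqr_ge0.
have E : \sum_i \sum_j (u i * v j - u j * v i) ^+ 2 =
   2 * ((\sum_i u i ^+ 2) * (\sum_i v i ^+ 2) - (\sum_i u i * v i) ^+ 2).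
  have E1 : forall i j, (u i * v j - u j * v i) ^+ 2 =
     u i ^+ 2 * v j ^+ 2 + v i ^+ 2 * u j ^+2 - 2 * ((u i * v i) * (u j * v j)).
    by move=> i j; ring.
  under eq_bigr do under eq_bigr do rewrite E1.
  transitivity (\sum_i (u i ^+ 2 * \sum_j v j ^+ 2 + v i ^+ 2 * \sum_j u j ^+ 2
        - 2 * (u i * v i * \sum_j u j * v j))).
    apply: eq_bigr => i _; rewrite sumrB big_split /= -!mulr_sumr; congr (_ + _ - _).
  rewrite sumrB big_split /= -!mulr_suml -mulr_sumr -mulr_suml. ring.
lra.
Qed.
End Geo.


Section Geo2.
Variables (K : realType) (d : nat).
Implicit Types p q r : 'rV[K]_d.

Lemma edist_ge0 p q : 0 <= edist p q.
Proof. exact: sqrtr_ge0. Qed.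

Lemma edist_sym p q : edist p q = edist q p.
Proof. by rewrite /edist; congr Num.sqrt; apply: eq_bigr => i _; ring. Qed.

Lemma edist_tri p q r : edist p r <= edist p q + edist q r.
Proof.
rewrite /edist.
set u := fun i => p ord0 i - q ord0 i.
set v := fun i => q ord0 i - r ord0 i.
have -> : \sum_(i < d) (p ord0 i - r ord0 i) ^+ 2 = \sum_i (u i + v i) ^+ 2.
  by apply: eq_bigr => i _; rewrite /u /v; congr (_ ^+ 2); ring.
rewrite -/(\sum_i u i ^+2) -/(\sum_i v i ^+ 2).
set A := \sum_i u i ^+ 2; set B := \sum_i v i ^+ 2.
have A0 : 0 <= A by apply: sumr_ge0 => i _; exact: sqr_ge0.
have B0 : 0 <= B by apply: sumr_ge0 => i _; exact: sqr_ge0.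
have E : \sum_i (u i + v i) ^+ 2 = A + B + 2 * \sum_i u i * v i.
  rewrite /A /B -big_split /= mulr_sumr -big_split /=.
  by apply: eq_bigr => i _; ring.
have S : \sum_i u i * v i <= Num.sqrt A * Num.sqrt B.
  rewrite -sqrtrM //.
  apply: le_trans (ler_norm _) _.
  rewrite -sqrtr_sqr ler_sqrt; last by apply: mulr_ge0.
  exact: CS.
have sA := sqrtr_ge0 A; have sB := sqrtr_ge0 B.
rewrite -(ger0_norm (addr_ge0 sA sB)) -sqrtr_sqr ler_sqrt ?sqr_ge0 // E.
rewrite sqrrD !sqr_sqrtr //. lra.
Qed.

Lemma edist_eq0 p q : edist p q = 0 -> p = q.
Proof.
move/eqP; rewrite /edist sqrtr_eq0 => H.
have H0 : \sum_(i < d) (p ord0 i - q ord0 i) ^+ 2 == 0.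
  by rewrite eq_le H /=; apply: sumr_ge0 => i _; exact: sqr_ge0.
apply/rowP => i.
have := @psumr_eq0P _ _ xpredT (fun j => (p ord0 j - q ord0 j) ^+ 2) (fun j _ => sqr_ge0 _) (eqP H0) i isT.
by move/eqP; rewrite sqrf_eq0 subr_eq0 => /eqP.
Qed.
End Geo2.


Section Walks.
Variables (T : Type) (K : realType) (E : T -> T -> Prop) (w : T -> T -> K).

Lemma walk_ok_cat x s t :
  walk_ok E x (s ++ t) <-> walk_ok E x s /\ walk_ok E (last x s) t.
Proof.
elim: s x => [|y s IH] x /=; first by split=> // [[]].
rewrite IH; tauto.
Qed.

Lemma walk_len_cat x s t :
  walk_len w x (s ++ t) = walk_len w x s + walk_len w (last x s) t.
Proof.
elim: s x => [|y s IH] x /=; first by rewrite add0r.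
by rewrite IH addrA.
Qed.

Hypothesis Esym : forall x y, E x y -> E y x.
Hypothesis wsym : forall x y, w x y = w y x.

Lemma walk_rev x s : walk_ok E x s ->
  [/\ walk_ok E (last x s) (rev (belast x s)),
      last (last x s) (rev (belast x s)) = x &
      walk_len w (last x s) (rev (belast x s)) = walk_len w x s].
Proof.
elim: s x => [|y s IH] x /=; first by [].
move=> [Hxy Hs]; have [H1 H2 H3] := IH y Hs.
rewrite rev_cons -cats1; split.
- by apply/walk_ok_cat; split => //; rewrite H2 /=; split => //; exact: Esym.
- by rewrite last_cat.
- by rewrite walk_len_cat H3 H2 /= addr0 wsym addrC.
Qed.

Definition wk x s y (L : K) :=
  [/\ walk_ok E x s, last x s = y & walk_len w x s <= L].

Lemma wk_nil x L : 0 <= L -> wk x [::] x L.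
Proof. by move=> L0; split. Qed.

Lemma wk_cat x s y t z L1 L2 : wk x s y L1 -> wk y t z L2 -> wk x (s ++ t) z (L1 + L2).
Proof.
move=> [h1 h2 h3] [g1 g2 g3]; split.
- by apply/walk_ok_cat; rewrite h2.
- by rewrite last_cat h2.
- by rewrite walk_len_cat h2 lerD.
Qed.

Lemma wk_edge x y : E x y -> wk x [:: y] y (w x y).
Proof. by move=> h; split => //=; rewrite addr0. Qed.

Lemma wk_rev x s y L : wk x s y L -> wk y (rev (belast x s)) x L.
Proof.
move=> [h1 h2 h3]; have [g1 g2 g3] := walk_rev x s h1.
by rewrite -h2; split => //; rewrite g3.
Qed.

Lemma wk_le x s y L L' : L <= L' -> wk x s y L -> wk x s y L'.
Proof. by move=> h [h1 h2 h3]; split => //; apply: le_trans h. Qed.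
End Walks.

Lemma walk_dist (K : realType) (d : nat) (x : 'rV[K]_d) s :
  edist x (last x s) <= walk_len (@edist K d) x s.
Proof.
elim: s x => [|y s IH] x /=; first by rewrite /edist big1 ?sqrtr0 // => i _; rewrite subrr expr0n.
by apply: le_trans (edist_tri _ _ x y _) _; rewrite lerD2l.
Qed.
Arguments wk {T K} E w x s y L.
Arguments wk_nil {T K E w} x L.
Arguments wk_cat {T K E w x s y t z L1 L2}.
Arguments wk_edge {T K E} w {x y}.
Arguments wk_rev {T K E w} Esym wsym {x s y L}.
Arguments wk_le {T K E w x s y L L'}.


Section Pow.
Variables (K : realType) (R : K) (hR : 1 < R).

Lemma R0 : R != 0. Proof. by apply: lt0r_neq0; apply: lt_trans hR. Qed.
Lemma Rpos : 0 < R. Proof. by apply: lt_trans hR. Qed.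

Lemma powS (j : int) : R ^ (j + 1) = R ^ j * R.
Proof. by rewrite expfzDr ?R0 // expr1z. Qed.

Definition B (j : int) := R ^ (j + 1) / (R - 1).

Lemma B_pos j : 0 < B j.
Proof. by rewrite /B divr_gt0 ?exprz_gt0 ?Rpos // subr_gt0. Qed.

Lemma B_E j : B j = R ^ j * R / (R - 1).
Proof. by rewrite /B powS. Qed.

Lemma B_step j : B (j + 1) = B j + R ^ (j + 1).
Proof.
rewrite /B powS [R ^ (j + 1)]powS.
have h : R - 1 != 0 by rewrite subr_eq0 gt_eqF.
by field.
Qed.

Lemma B_mono j k : j <= k -> B j <= B k.
Proof.
move=> h; rewrite /B ler_pM2r ?invr_gt0 ?subr_gt0 //.
by apply: ler_weXz2l; [exact: ltW | rewrite lerD2r].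
Qed.

Lemma bern (n : nat) : 1 + n%:R * (R - 1) <= R ^+ n.
Proof.
elim: n => [|n IH]; first by rewrite mul0r addr0 expr0.
rewrite exprS.
have h1 : 0 <= R - 1 by rewrite subr_ge0 ltW.
have h2 : 1 + n%:R * (R - 1) <= R ^+ n := IH.
have h3 : 0 <= n%:R * (R - 1) by apply: mulr_ge0.
rewrite -natr1.
nra.
Qed.

Lemma floor_pow (x : K) : 0 < x -> exists i : int, R ^ i <= x /\ x < R ^ (i + 1).
Proof.
move=> x0.
have [n hn] : exists n : nat, x < R ^ (n%:Z).
  have y0 : 0 <= x / (R - 1) by rewrite divr_ge0 ?ltW // subr_gt0.
  exists (Num.bound (x / (R - 1))).
  have := archi_boundP y0; set N := Num.bound _ => hN.
  have := bern N; rewrite -[R ^ N%:Z]/(R ^+ N) => hb.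
  have hR1 : 0 < R - 1 by rewrite subr_gt0.
  rewrite ltr_pdivrMr // in hN. lra.
have [m hm] : exists m : nat, R ^ (- (m%:Z)) <= x.
  have y0 : 0 <= x^-1 / (R - 1) by rewrite divr_ge0 ?invr_ge0 ?ltW // subr_gt0.
  exists (Num.bound (x^-1 / (R - 1))).
  have := archi_boundP y0; set N := Num.bound _ => hN.
  have := bern N => hb.
  have hR1 : 0 < R - 1 by rewrite subr_gt0.
  rewrite ltr_pdivrMr // in hN.
  have hxN : x^-1 < R ^+ N by lra.
  rewrite -exprnN -[x]invrK lef_pV2 ?posrE ?exprn_gt0 ?invr_gt0 ?Rpos //.
  exact: ltW.
suff H : forall (k : nat) (a : int), R ^ a <= x -> x < R ^ (a + k%:Z) ->
    exists i : int, R ^ i <= x /\ x < R ^ (i + 1).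
  apply: (H (n + m)%N (- (m%:Z))) => //.
  by have -> : - (m%:Z) + (n + m)%N%:Z = n%:Z by lia.
elim=> [|k IH] a ha hx.
  by rewrite addr0 in hx; move: (lt_le_trans hx ha); rewrite ltxx.
case: (ltP x (R ^ (a + 1))) => h; first by exists a.
apply: (IH (a + 1)) => //.
by have -> : a + 1 + k%:Z = a + k.+1%:Z by lia.
Qed.
End Pow.
Arguments B {K} R j.
Arguments R0 {K R}.
Arguments Rpos {K R}.
Arguments powS {K R}.
Arguments B_pos {K R}.
Arguments B_E {K R}.
Arguments B_step {K R}.
Arguments B_mono {K R}.
Arguments floor_pow {K R}.


Section Hier.
Variables (K : realType) (R : K) (hR : 1 < R) (lambda : K) (d : nat)
  (V : seq 'rV[K]_d) (nodes : seq ('rV[K]_d * int)) (root : 'rV[K]_d * int)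
  (par : 'rV[K]_d * int -> 'rV[K]_d * int).
Hypothesis H : is_hierarchy R V nodes root par.

Lemma root_top (c : 'rV[K]_d * int) : c \in nodes -> c != root -> c.2 < root.2.
Proof.
case: H => _ _ _ Hpar0 _.
have Hpar : forall c : 'rV[K]_d * int, c \in nodes -> c != root ->
  [/\ par c \in nodes, (par c).2 = c.2 + 1 & edist c.1 (par c).1 <= R ^ (c.2 + 1)] := Hpar0.
pose M : int := \sum_(c <- nodes) `|c.2|.
have HM : forall c : 'rV[K]_d * int, c \in nodes -> c.2 <= M.
  move=> c' hc'; apply: le_trans (ler_norm c'.2) _.
  rewrite /M (bigD1_seq c') //=; last by case: H.
  by rewrite lerDl; apply: sumr_ge0 => ? _; exact: normr_ge0.
suff S : forall n : nat, forall c : 'rV[K]_d * int, c \in nodes -> M - c.2 <= n%:Z -> c != root ->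
   c.2 < root.2.
  move=> hc hr; apply: (S `|M - c.2|%N) => //.
  have := HM c hc; lia.
elim=> [|n IH] c' hc hn hr.
  have [h1 h2 h3] := Hpar c' hc hr.
  have := HM _ h1; lia.
have [h1 h2 h3] := Hpar c' hc hr.
have [e|hne] := eqVneq (par c') root; first by rewrite -e h2; lia.
have := IH (par c') h1 ltac:(rewrite h2; lia) hne; rewrite h2; lia.
Qed.

Lemma node_le_root (c : 'rV[K]_d * int) : c \in nodes -> c.2 <= root.2.
Proof.
move=> hc; have [->|hne] := eqVneq c root; first by [].
exact: ltW (root_top _ hc hne).
Qed.

Lemma top_is_root (c : 'rV[K]_d * int) : c \in nodes -> root.2 <= c.2 -> c = root.
Proof.
move=> hc hl; have [//|hne] := eqVneq c root.
by have := root_top _ hc hne; lia.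
Qed.

Notation E := (S0_edge R lambda nodes root par).

Lemma E_sym x y : E x y -> E y x.
Proof.
move=> [hxy [lp [lq hc]]]; split; first by rewrite eq_sym.
exists lq, lp; case: hc => [[h1 h2 h3 h4 h5]|[h|h]].
- move: h3 h4 h5 => /= h3 h4 h5.
  left; split => //=; first by rewrite eq_sym.
  by rewrite edist_sym -h3.
- by right; right.
- by right; left.
Qed.

Lemma tree_edge x l x1 l1 : (x, l) \in nodes -> (x, l) != root ->
  par (x, l) = (x1, l1) -> x != x1 -> E x x1.
Proof.
move=> h1 h2 h3 h4; split => //; exists l, l1; right; right; by split.
Qed.

Lemma ascend (n : nat) : forall x l, (x, l) \in nodes -> l + n%:Z <= root.2 ->
  exists y, (y, l + n%:Z) \in nodes /\
    exists s, wk E (@edist K d) x s y (B R (l + n%:Z) - B R l).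
Proof.
elim: n => [|n IH] x l hx hl.
  exists x; rewrite addr0; split => //; exists [::]; apply: wk_nil.
  by rewrite subrr.
have hr : (x, l) != root.
  apply/negP => /eqP hr; move: hl; rewrite -hr /=; lia.
case: H => _ _ _ Hpar _.
have [h1 h2 h3] := Hpar _ hx hr.
case hp : (par (x, l)) => [x1 l1]; rewrite hp /= in h1 h2 h3.
have hl' : l1 + n%:Z <= root.2 by rewrite h2; lia.
have [y [hy [s hs]]] := IH x1 l1 h1 hl'.
have eq1 : l1 + n%:Z = l + n.+1%:Z by rewrite h2; lia.
rewrite eq1 in hy hs.
exists y; split => //.
have hst : B R l1 = B R l + R ^ (l + 1) by rewrite h2 B_step.
have [e|ne] := eqVneq x x1.
  exists s; rewrite e; apply: wk_le hs.
  by rewrite hst; have := exprz_gt0 (l + 1) (Rpos hR); lra.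
exists ([:: x1] ++ s).
have he := wk_edge (@edist K d) (tree_edge _ _ _ _ hx hr hp ne).
apply: wk_le (wk_cat he hs).
by rewrite hst; move: h3; lra.
Qed.

Lemma rep p j : p \in V -> j <= root.2 ->
  exists y l', [/\ (y, l') \in nodes, j <= l' &
    exists s, wk E (@edist K d) p s y (B R j)].
Proof.
move=> hp hj.
case: H => _ _ _ _ HV.
have [l hl] := HV p hp.
case: (leP j l) => hjl.
  exists p, l; split => //; exists [::]; apply: wk_nil; exact: ltW (B_pos hR j).
have [y [hy [s hs]]] := @ascend `|j - l|%N p l hl ltac:(lia).
have eq1 : l + `|j - l|%N%:Z = j by lia.
rewrite eq1 in hy hs.
exists y, j; split => //; exists s; apply: wk_le hs.
by have := B_pos hR l; lra.
Qed.
End Hier.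
Arguments rep {K R} hR {lambda d V nodes root par} H p j.
Arguments top_is_root {K R} hR {d V nodes root par} H c.
Arguments E_sym {K R lambda d nodes root par x y}.


Theorem lemma3 (K : realType) (R : K) (hR : 1 < R) :
  exists C : K, 0 < C /\
  forall eps : K, 0 < eps ->
  exists lambda0 : K, lambda0 <= C * (1 + eps^-1) /\
  forall lambda : K, lambda0 <= lambda ->
  forall (d : nat) (V : seq 'rV[K]_d), V != [::] ->
  forall (nodes : seq ('rV[K]_d * int)) (root : 'rV[K]_d * int)
         (par : 'rV[K]_d * int -> 'rV[K]_d * int),
    is_hierarchy R V nodes root par ->
    separation R nodes ->
    forall p q : 'rV[K]_d, p \in V -> q \in V ->
      S0_dist_le R lambda nodes root par p q ((1 + eps) * edist p q).
Proof.
have R1 : 0 < R - 1 by rewrite subr_gt0.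
have kpos : 0 < (R - 1)^-1 by rewrite invr_gt0.
have R0 : 0 < R by apply: lt_trans hR.
have Rk : 0 < R * (R - 1)^-1 by apply: mulr_gt0.
exists (4 * R * R * (R - 1)^-1); split.
  by rewrite !mulr_gt0.
move=> eps e0.
have ek : 0 < eps^-1 by rewrite invr_gt0.
exists (2 * R * (R - 1)^-1 + 4 * R * R * (R - 1)^-1 * eps^-1); split.
  have : 2 * (R * (R - 1)^-1) <= 4 * R * (R * (R - 1)^-1).
    by apply: ler_wpM2r; [exact: ltW | lra].
  lra.
move=> lambda hl d V _ nodes root par H _ p q hp hq.
have [epq|npq] := eqVneq p q.
  rewrite -epq; exists [::]; split => //=.
  by apply: mulr_ge0; [lra | exact: edist_ge0].
set D := edist p q.
have D0 : 0 < D.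
  rewrite lt_def edist_ge0 andbT; apply/eqP => /edist_eq0 h.
  by rewrite h eqxx in npq.
set x0 := eps * D * (R - 1) / (4 * R).
have x00 : 0 < x0.
  rewrite /x0; apply: divr_gt0; last by lra.
  by apply: mulr_gt0 => //; apply: mulr_gt0.
have [i [hi1 hi2]] := floor_pow hR _ x00.
set L := root.2.
set j := if i <= L then i else L.
have hjL : j <= L.
  by rewrite /j; case: (boolP (i <= L)) => h /=.
have hji : j <= i.
  rewrite /j; case: (boolP (i <= L)) => h //=.
  by rewrite -ltNge in h; exact: ltW.
have [yp [lp [hyp hlp [sp hsp]]]] := rep hR (lambda:=lambda) H p j hp hjL.
have [yq [lq [hyq hlq [sq hsq]]]] := rep hR (lambda:=lambda) H q j hq hjL.
have hsq' := wk_rev (fun x y h => E_sym h) (edist_sym K d) hsq.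
have hBj : B R j <= B R i := B_mono hR _ _ hji.
have tpos : 0 < R ^ i := exprz_gt0 i R0.
have hBi : B R i = R ^ i * (R * (R - 1)^-1) by rewrite (B_E hR) mulrA.
have fx : x0 * (4 * (R * (R - 1)^-1)) = eps * D.
  rewrite /x0; have : R - 1 != 0 by lra.
  have : R != 0 by lra. move=> h1 h2; field; rewrite h2 /=; lra.
have ft : R ^ i * (R * (R - 1)^-1) <= x0 * (R * (R - 1)^-1) by rewrite ler_pM2r.
have eD : 0 < eps * D by apply: mulr_gt0.
have [e|ne] := eqVneq yp yq.
  rewrite -e in hsq'.
  exists (sp ++ rev (belast q sq)).
  apply: wk_le (wk_cat hsp hsq').
  rewrite hBi in hBj. lra.
have ji : j = i.
  rewrite /j; case: ifP => // /negbT hiL.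
  have hL : j = L by rewrite /j (negbTE hiL).
  rewrite hL in hlp hlq.
  have r1 := top_is_root hR H (yp, lp) hyp hlp.
  have r2 := top_is_root hR H (yq, lq) hyq hlq.
  by move: ne; rewrite -[yp]/((yp, lp).1) -[yq]/((yq, lq).1) r1 r2 eqxx.
rewrite ji in hsp hsq' hlp hlq.
have dp : edist p yp <= B R i.
  case: hsp => _ h2 h3; rewrite -h2; exact: le_trans (walk_dist _ _ p sp) h3.
have dq : edist q yq <= B R i.
  case: hsq => _ h2 h3; rewrite -h2 -ji; exact: le_trans (walk_dist _ _ q sq) h3.
have dpq : edist yp yq <= 2 * B R i + D.
  have t1 := edist_tri _ _ yp p yq.
  have t2 := edist_tri _ _ p q yq.
  rewrite (edist_sym _ _ yp p) in t1.
  rewrite -/D in t2.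
  lra.
have hE : S0_edge R lambda nodes root par yp yq.
  split => //; exists i, i; left; split => //.
  - by exists lp.
  - by exists lq.
  apply: le_trans dpq _.
  have h1 : (2 * R * (R - 1)^-1 + 4 * R * R * (R - 1)^-1 * eps^-1) * R ^ i
         <= lambda * R ^ i by rewrite ler_pM2r.
  have fD : D = x0 * (4 * (R * (R - 1)^-1)) * eps^-1.
    by rewrite fx mulrAC mulfV ?mul1r // gt_eqF.
  have h2 : x0 * (4 * (R * (R - 1)^-1) * eps^-1) <
            (R ^ i * R) * (4 * (R * (R - 1)^-1) * eps^-1).
    by rewrite ltr_pM2r ?mulr_gt0 // -powS.
  rewrite hBi. lra.
exists (sp ++ ([:: yq] ++ rev (belast q sq))).
apply: wk_le (wk_cat hsp (wk_cat (wk_edge (@edist K d) hE) hsq')).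
rewrite hBi in dpq *. lra.
Qed.
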